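(* Assume (L): for any $\delta,\varepsilon>0$ and compact $K\subset E$ there are $N>0$, $p>0$ such that for all $n\ge N$ and $x\in K$, $\mathbb P^x\{|\frac1{n\delta}\int_0^{n\delta}f(X_s)ds-\mu(f)|>\varepsilon\}\le e^{-pn\delta}$. Then for any $\varepsilon>0$ and compact $K\subset E$ there are $S>0$, $C>0$, $\rho>0$ such that for all $t\ge S$ and $x\in K$, $$\mathbb P^x\Big\{\sup_{s\ge t}\Big|\frac1s\int_0^sf(X_u)du-\mu(f)\Big|>\varepsilon\Big\}\le Ce^{-\rho t}.$$
   Context: $E$ is a locally compact separable metric space in which every closed ball is compact. $(X_t)$ is a right-continuous time-homogeneous (standard) Markov process on $E$ with laws $\mathbb P^x$, satisfying the weak Feller property and ergodicity (a unique probability measure $\mu$ with $\|P_t(x,\cdot)-\mu\|_{TV}\to0$ for all $x$, $P_t(x,\cdot)$ the transition probabilities); $\mu(f)=\int f\,d\mu$. $f:E\to\mathbb R$ is continuous and bounded. *)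

(* Defs.v *)
From HB Require Import structures.
From mathcomp Require Import all_boot all_order all_algebra.
From mathcomp Require Import all_classical all_reals all_analysis measurable_realfun.
Set Implicit Arguments. Unset Strict Implicit. Unset Printing Implicit Defensive.
Import Order.TTheory GRing.Theory Num.Theory.
Import numFieldNormedType.Exports.
Local Open Scope classical_set_scope.
Local Open Scope ring_scope.

(* Borel sigma-algebra of a topological space, as a measurable type
   (an alias of the carrier E). *)
Notation Borel E := (g_sigma_algebraType (@open E)).

Definition cball {R : realType} {E : pseudoPMetricType R} (x : E) (r : R) :=
  [set y | forall e, r < e -> ball x e y].

Definition good_state_space {R : realType} (E : pseudoPMetricType R) : Prop :=
  [/\ hausdorff_space E,
      locally_compact [set: E],
      (exists D : set E, countable D /\ closure D = [set: E]) &
      (forall (x : E) (r : R), compact (cball x r))].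

Section Markov.
Context {R : realType} {E : pseudoPMetricType R} {d : measure_display}
  {Omega : measurableType d}.
Variables (P : E -> probability Omega R) (X : R -> Omega -> E).

Definition trans (t : R) (x : E) (A : set E) : \bar R := P x (X t @^-1` A).

Definition semigroup (t : R) (g : E -> R) (x : E) : R :=
  fine (\int[P x]_w (g (X t w))%:E)%E.

Definition tv_dist (t : R) (x : E) (mu : probability (Borel E) R) : R :=
  sup [set r | exists A : set E, measurable (A : set (Borel E)) /\
         r = `| fine (trans t x A) - fine (mu A) |].

(* (X_t) is a right-continuous time-homogeneous Markov process with laws P^x
   (Markov property w.r.t. the natural filtration, in finite-dimensional form) *)
Definition right_continuous_Markov : Prop :=
  [/\ (forall t, 0 <= t -> measurable_fun [set: Omega] (X t : Omega -> Borel E)),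
      (forall w t, 0 <= t -> (X ^~ w) x @[x --> t^'+] --> X t w),
      (forall x : E, P x [set w | X 0 w = x] = 1%E),
      (forall t (A : set E), 0 <= t -> measurable (A : set (Borel E)) ->
          measurable_fun [set: Borel E] (fun y : Borel E => trans t y A)) &
      (forall (x : E) (t s : R) (n : nat) (u : 'I_n -> R) (A : 'I_n -> set E)
              (B : set E),
          0 <= t -> 0 <= s -> (forall i, 0 <= u i <= t) ->
          (forall i, measurable (A i : set (Borel E))) ->
          measurable (B : set (Borel E)) ->
          P x ([set w | forall i, A i (X (u i) w)] `&` (X (t + s) @^-1` B)) =
          (\int[P x]_(w in [set w | forall i, A i (X (u i) w)])
              trans s (X t w) B)%E)].

Definition weak_Feller : Prop :=
  forall t (g : E -> R), 0 <= t -> continuous g ->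
    (exists M, forall y, `|g y| <= M) -> continuous (semigroup t g).

Definition ergodic_with (mu : probability (Borel E) R) : Prop :=
  forall x : E, tv_dist t x mu @[t --> +oo] --> 0.

Definition time_avg (f : E -> R) (s : R) (w : Omega) : R :=
  (Rintegral (@lebesgue_measure R) `[0, s] (fun u => f (X u w))) / s.

End Markov.

Definition mean {R : realType} {E : pseudoPMetricType R}
  (mu : probability (Borel E) R) (f : E -> R) : R :=
  Rintegral mu [set: Borel E] f.

(* Main.v *)
Require Import Defs.
From HB Require Import structures.
From mathcomp Require Import all_boot all_order all_algebra.
From mathcomp Require Import all_classical all_reals all_analysis measurable_realfun.
From mathcomp Require Import ring lra.
Import Order.TTheory GRing.Theory Num.Theory.
Import numFieldNormedType.Exports.
Local Open Scope classical_set_scope.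
Local Open Scope ring_scope.

Local Notation leb := (@lebesgue_measure _).

Lemma int_bdd {R : realType} (D : set R) (h : R -> R) (B : R) :
  measurable D -> (lebesgue_measure D < +oo)%E -> measurable_fun D h ->
  (forall x, D x -> `|h x| <= B) -> (@lebesgue_measure R).-integrable D (EFin \o h).
Proof.
move=> mD Doo mh hB; apply: measurable_bounded_integrable => //.
exists B; split; first exact: num_real.
by move=> M BM x Dx /=; exact: (le_trans (hB x Dx) (ltW BM)).
Qed.

Lemma Rint_bound {R : realType} (D : set R) (h : R -> R) (B : R) :
  measurable D -> (lebesgue_measure D < +oo)%E -> measurable_fun D h ->
  (forall x, D x -> `|h x| <= B) ->
  `|Rintegral (@lebesgue_measure R) D h| <= B * fine (lebesgue_measure D).
Proof.
move=> mD Doo mh hB.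
have ih := @int_bdd R D h B mD Doo mh hB.
apply: le_trans; first exact: le_normr_Rintegral.
rewrite -Rintegral_cst //.
apply: le_Rintegral => //.
- apply: (@int_bdd _ _ _ B) => //.
    exact: (measurableT_comp (@normr_measurable R setT) mh).
  by move=> x Dx; rewrite normr_id hB.
- by apply: (@int_bdd _ _ _ `|B|) => //.
Qed.

Lemma Rint_sum {R : realType} (D : set R) (I : Type) (s : seq I) (h : I -> R -> R) :
  measurable D -> (forall i, (@lebesgue_measure R).-integrable D (EFin \o h i)) ->
  Rintegral (@lebesgue_measure R) D (fun u => \sum_(i <- s) h i u) =
  \sum_(i <- s) Rintegral (@lebesgue_measure R) D (h i).
Proof.
move=> mD ih; elim: s => [|i s IH].
  under eq_Rintegral do rewrite big_nil.
  by rewrite Rintegral_cst // mul0r big_nil.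
under eq_Rintegral do rewrite big_cons.
rewrite RintegralD // ?IH ?big_cons //.
have -> : EFin \o (fun u => \sum_(j <- s) h j u) = (fun u => \sum_(j <- s) (EFin \o h j) u)%E.
  by apply/funext => u; rewrite /= sumEFin.
exact: integrable_sum.
Qed.

Lemma Rint_dct {R : realType} (D : set R) (h_ : nat -> R -> R) (g : R -> R) (B : R) :
  measurable D -> (lebesgue_measure D < +oo)%E ->
  (forall n, measurable_fun D (h_ n)) -> measurable_fun D g ->
  (forall x, D x -> h_ ^~ x @ \oo --> g x) ->
  (forall n x, D x -> `|h_ n x| <= B) ->
  Rintegral (@lebesgue_measure R) D (h_ n) @[n --> \oo] -->
  Rintegral (@lebesgue_measure R) D g.
Proof.
move=> mD Doo mh mg hg hB.
have ff : {ae (@lebesgue_measure R), forall x, D x -> (fun n => (EFin \o h_ n) x) @ \oo --> (EFin \o g) x}.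
  apply: aeW => x Dx; apply: cvg_EFin; first exact: nearW.
  exact: hg.
have igB : (@lebesgue_measure R).-integrable D (EFin \o cst `|B|).
  apply: (@int_bdd _ _ _ `|B|) => //; [..|by move=> x _ /=; rewrite normr_id].
have fg : {ae (@lebesgue_measure R), forall x n, D x -> (`|(EFin \o h_ n) x| <= (EFin \o cst `|B|%R) x)%E}.
  apply: aeW => x n Dx /=; rewrite lee_fin (le_trans (hB n x Dx))//; exact: ler_norm.
have [ig _ H] := @dominated_convergence _ _ _ (@lebesgue_measure R) D mD
  (fun n => EFin \o h_ n) (EFin \o g) (EFin \o cst `|B|)
  (fun n => proj2 (measurable_EFinP _ _) (mh n)) (proj2 (measurable_EFinP _ _) mg) ff igB fg.
have fin : (\int[@lebesgue_measure R]_(x in D) (EFin \o g) x)%E \is a fin_num.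
  by apply: integrable_fin_num.
move: H; rewrite -(fineK fin) => /fine_cvg.
exact.
Qed.

Lemma itv_fin {R : realType} (s : R) : (lebesgue_measure (`[0%R, s] : set R) < +oo)%E.
Proof. by rewrite lebesgue_measure_itv/=; case: ifP => _; rewrite -?EFinD ?ltry. Qed.

Definition cellk {R : realType} (n k : nat) : set R :=
  `](k%:R - 1) / n.+1%:R, k%:R / n.+1%:R].
Definition Kn {R : realType} (s : R) (n : nat) : nat := (n.+1 * (Num.truncn s).+1).+1.
Definition stepf {R : realType} (g : R -> R) (s : R) (n : nat) (u : R) : R :=
  \sum_(k < Kn s n) g (k%:R / n.+1%:R) * (\1_(@cellk R n k) u).

Lemma cell_uniq {R : realType} n j k (u : R) : @cellk R n j u -> @cellk R n k u -> j = k.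
Proof.
rewrite /cellk /= !in_itv /= => /andP[j1 j2] /andP[k1 k2].
have hn : 0 < n.+1%:R^-1 :> R by rewrite invr_gt0 ltr0n.
have jk : (j%:R - 1) / n.+1%:R < k%:R / n.+1%:R :> R := lt_le_trans j1 k2.
have kj : (k%:R - 1) / n.+1%:R < j%:R / n.+1%:R :> R := lt_le_trans k1 j2.
rewrite ltr_pM2r // ltrBlDr natr1 ltr_nat ltnS in jk.
rewrite ltr_pM2r // ltrBlDr natr1 ltr_nat ltnS in kj.
by apply/eqP; rewrite eqn_leq jk kj.
Qed.

Lemma step_eval {R : realType} (g : R -> R) s n u : 0 <= u <= s ->
  exists k : nat, [/\ (k < Kn s n)%N, @cellk R n k u & stepf g s n u = g (k%:R / n.+1%:R)].
Proof.
move=> /andP[u0 us].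
set v := n.+1%:R * u.
have v0 : 0 <= v by rewrite mulr_ge0.
have c0 : 0 <= Num.ceil v by rewrite ceil_ge0 (lt_le_trans _ v0) // ltrN10.
set k := `|Num.ceil v|%N.
have kE : (k%:R : R) = (Num.ceil v)%:~R by rewrite /k natr_absz; congr intmul; exact: gez0_abs.
have /andP[ck1 ck2] := ceil_itv v.
rewrite intrB mulr1z -kE in ck1; rewrite -kE in ck2.
have hk : (k < Kn s n)%N.
  rewrite /Kn ltnS.
  have h : v <= (n.+1 * (Num.truncn s).+1)%:R.
    rewrite natrM /v ler_pM2l ?ltr0n //; apply: (le_trans us); apply: ltW.
    by rewrite -truncn_le_nat leqnn.
  by move: (lt_le_trans ck1 h); rewrite ltrBlDr natr1 ltr_nat ltnS.
have hc : @cellk R n k u.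
  rewrite /cellk /= in_itv /=; apply/andP; split.
    by rewrite ltr_pdivrMr ?ltr0n // mulrC.
  by rewrite ler_pdivlMr ?ltr0n // mulrC.
exists k; split => //.
rewrite /stepf (bigD1 (Ordinal hk)) //= big1 ?addr0 => [|j jk].
  by rewrite indicE mem_set // mulr1.
rewrite indicE memNset ?mulr0 // => cj.
by move/eqP: jk; apply; apply/val_inj => /=; exact: (@cell_uniq R n j k u cj hc).
Qed.

Lemma step_cvg {R : realType} (g : R -> R) s u :
  g x @[x --> u^'+] --> g u -> 0 <= u <= s ->
  stepf g s n u @[n --> \oo] --> g u.
Proof.
move=> hrc us; apply/cvgrPdist_lt => e e0.
move/cvgrPdist_lt: hrc => /(_ e e0) /nbhs_ballP[d /= d0 Hd].
near=> n.
have [k [_ ck ->]] := step_eval g s n u us.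
move: ck; rewrite /cellk /= in_itv /= => /andP[k1 k2].
case: (eqVneq (k%:R / n.+1%:R) u) => [->|uk]; first by rewrite subrr normr0.
have uk' : u < k%:R / n.+1%:R by rewrite lt_neqAle eq_sym uk k2.
apply: Hd => //.
rewrite /ball /= ltr0_norm ?subr_lt0 // opprB.
have dn : n.+1%:R^-1 < d by near: n; exact: near_infty_natSinv_lt (PosNum d0).
rewrite mulrBl mul1r in k1.
move: k1 dn; set x := k%:R / n.+1%:R; set i := n.+1%:R^-1 => k1 dn.
lra.
Unshelve. all: by end_near.
Qed.

Lemma step_meas {R : realType} (g : R -> R) s n : measurable_fun setT (stepf g s n).
Proof.
rewrite /stepf; apply: measurable_sum => k; apply: measurable_funM.
  exact: measurable_cst.
by apply: measurable_indic; exact: measurable_itv.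
Qed.

Lemma int01 {R : realType} (s : R) (h : R -> R) B : measurable_fun `[0, s] h ->
  (forall x, `|h x| <= B) -> (@lebesgue_measure R).-integrable `[0, s] (EFin \o h).
Proof.
move=> mh hB; apply: (@int_bdd _ _ _ B) => //; first exact: itv_fin.
Qed.

Lemma step_int {R : realType} (g : R -> R) s n :
  Rintegral (@lebesgue_measure R) `[0, s] (stepf g s n) =
  \sum_(k < Kn s n) g (k%:R / n.+1%:R) *
     Rintegral (@lebesgue_measure R) `[0, s] (\1_(@cellk R n k)).
Proof.
have mi : forall k, measurable_fun `[0, s] (\1_(@cellk R n k) : R -> R).
  by move=> k; apply: measurable_indic; exact: measurable_itv.
rewrite /stepf Rint_sum //.
  apply: eq_bigr => k _; rewrite RintegralZl //.
  by apply: (@int01 _ _ _ 1) => // x; rewrite indicE; case: (_ \in _); rewrite ?normr1 ?normr0.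
move=> k; apply: (@int01 _ _ _ `|g (k%:R / n.+1%:R)|).
  by apply: measurable_funM => //; exact: measurable_cst.
move=> x; rewrite normrM indicE; case: (_ \in _); rewrite ?normr1 ?normr0 ?mulr1 ?mulr0 //.
Qed.

Lemma step_lim {R : realType} (g : R -> R) (M : R) (s : R) :
  (forall u, `|g u| <= M) -> (forall u, 0 <= u -> g x @[x --> u^'+] --> g u) ->
  measurable_fun `[0, s] g /\
  Rintegral (@lebesgue_measure R) `[0, s] (stepf g s n) @[n --> \oo] -->
  Rintegral (@lebesgue_measure R) `[0, s] g.
Proof.
move=> hg hrc.
have conv : forall u, u \in `[0, s] -> stepf g s n u @[n --> \oo] --> g u.
  move=> u; rewrite in_itv /= => /andP[u0 us].
  by apply: step_cvg; [exact: hrc | rewrite u0 us].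
have mg : measurable_fun `[0, s] g.
  exact: (measurable_fun_cvg (h := stepf g s) (fun m => measurable_funTS (step_meas g s m)) conv).
split => //.
apply: (@Rint_dct _ _ _ _ M) => //.
- exact: itv_fin.
- by move=> m; exact: measurable_funTS (step_meas g s m).
- move=> m x; rewrite /= in_itv /= => hx.
  by have [k [_ _ ->]] := step_eval g s m x hx.
Qed.

Lemma lam_cc {R : realType} (a : R) : 0 <= a ->
  fine (lebesgue_measure (`[0%R, a] : set R)) = a.
Proof.
move=> a0; rewrite lebesgue_measure_itv /= lte_fin.
case: ifPn => [_|]; first by rewrite /= subr0.
by rewrite -leNgt => aa /=; apply/esym/eqP; rewrite eq_le aa a0.
Qed.

Lemma lam_oc {R : realType} (a b : R) : a <= b ->
  fine (lebesgue_measure (`]a, b] : set R)) = b - a.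
Proof.
move=> ab; rewrite lebesgue_measure_itv /= lte_fin.
case: ifPn => [_|]; first by [].
rewrite -leNgt => aa /=.
have -> : b = a by apply/eqP; rewrite eq_le aa ab.
by rewrite subrr.
Qed.

Lemma I_bound {R : realType} (g : R -> R) (M a : R) : 0 <= a ->
  measurable_fun `[0, a] g -> (forall u, `|g u| <= M) ->
  `|Rintegral (@lebesgue_measure R) `[0, a] g| <= M * a.
Proof.
move=> a0 mg hg.
rewrite -{2}(@lam_cc _ a a0).
apply: (@Rint_bound _ _ _ M) => //; first exact: itv_fin.
Qed.

Lemma I_diff {R : realType} (g : R -> R) (M a b : R) : 0 <= a -> a <= b ->
  measurable_fun `[0, b] g -> (forall u, `|g u| <= M) ->
  `|Rintegral (@lebesgue_measure R) `[0, b] g - Rintegral (@lebesgue_measure R) `[0, a] g|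
    <= M * (b - a).
Proof.
move=> a0 ab mg hg.
have setE : (`[0, b]%classic : set R) = `[0, a]%classic `|` `]a, b]%classic.
  by apply: itv_bndbnd_setU; rewrite bnd_simp.
have ig := @int01 _ _ _ M mg hg.
rewrite setE in ig.
rewrite [in X in `|X - _|]setE Rintegral_setU //; last first.
  apply/eqP; rewrite -subset0 => x [].
  rewrite /= !in_itv /= => /andP[_ xa] /andP[ax _].
  by move: (lt_le_trans ax xa); rewrite ltxx.
rewrite [X in `|X|]addrC addKr -(@lam_oc _ a b ab).
apply: (@Rint_bound _ _ _ M) => //.
- by rewrite lebesgue_measure_itv; case: ifP => _; rewrite -?EFinD ?ltry.
- apply: (measurable_funS _ _ mg) => //.
  by rewrite setE; exact: subsetUr.
Qed.

Lemma A_bound {R : realType} (I : R -> R) (M a b : R) :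
  (forall a b, 0 <= a -> a <= b -> `|I b - I a| <= M * (b - a)) ->
  (forall a, 0 <= a -> `|I a| <= M * a) ->
  0 < a -> a <= b -> `|I b / b - I a / a| <= 2 * M * (b - a) / b.
Proof.
move=> hd hb a0 ab.
have b0 : 0 < b := lt_le_trans a0 ab.
have e : I b / b - I a / a = (a * (I b - I a) - (b - a) * I a) / (a * b).
  by field; apply/andP; split; rewrite gt_eqF.
have h : `|a * (I b - I a) - (b - a) * I a| <= 2 * M * (b - a) * a.
  apply: le_trans; first exact: ler_normB.
  have ba0 : 0 <= b - a by rewrite subr_ge0.
  rewrite !normrM (ger0_norm (ltW a0)) (ger0_norm ba0).
  have h1 : a * `|I b - I a| <= a * (M * (b - a)) := ler_wpM2l (ltW a0) (hd a b (ltW a0) ab).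
  have h2 : (b - a) * `|I a| <= (b - a) * (M * a) := ler_wpM2l ba0 (hb a (ltW a0)).
  apply: (le_trans (lerD h1 h2)).
  by rewrite le_eqVlt; apply/orP; left; apply/eqP; ring.
rewrite e normrM normfV (ger0_norm (ltW (mulr_gt0 a0 b0))).
rewrite ler_pdivrMr ?mulr_gt0 //.
apply: (le_trans h); rewrite le_eqVlt; apply/orP; left; apply/eqP.
by field; rewrite gt_eqF.
Qed.

Lemma f_meas {R : realType} {E : pseudoPMetricType R} (f : E -> R) :
  continuous f -> measurable_fun [set: Borel E] (f : Borel E -> R).
Proof.
move=> cf; apply: (measurability _ (RGenOInfty.measurableE R)) => //.
move=> _ [_ [x ->] <-]; rewrite setTI; apply: sub_sigma_algebra.
by move/continuousP: cf; apply; exact: interval_open.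
Qed.

Lemma int_meas_w {R : realType} {E : pseudoPMetricType R} {d} {Omega : measurableType d}
  (X : R -> Omega -> E) (f : E -> R) (M s : R) :
  (forall t, 0 <= t -> measurable_fun [set: Omega] (X t : Omega -> Borel E)) ->
  (forall w t, 0 <= t -> (X ^~ w) x @[x --> t^'+] --> X t w) ->
  continuous f -> (forall y, `|f y| <= M) ->
  measurable_fun [set: Omega]
    (fun w => Rintegral (@lebesgue_measure R) `[0, s] (fun u => f (X u w))).
Proof.
move=> mX rcX cf hf.
have mf := @f_meas R E f cf.
have rc : forall w u, 0 <= u -> (fun u => f (X u w)) x @[x --> u^'+] --> f (X u w).
  by move=> w u u0; exact: (cvg_comp _ _ (rcX w u u0) (cf (X u w))).
pose h := fun n w => \sum_(k < Kn s n) f (X (k%:R / n.+1%:R) w) *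
   Rintegral (@lebesgue_measure R) `[0, s] (\1_(@cellk R n k)).
apply: (measurable_fun_cvg (h := h)).
- move=> n; apply: measurable_sum => k; apply: measurable_funM; last exact: measurable_cst.
  have k0 : 0 <= k%:R / n.+1%:R :> R by rewrite divr_ge0.
  exact: (measurableT_comp mf (mX _ k0)).
- move=> w _.
  have [_ H] := @step_lim R (fun u => f (X u w)) M s (fun u => hf _) (rc w).
  have HE : (fun n => Rintegral (@lebesgue_measure R) `[0, s] (stepf (fun u => f (X u w)) s n))
      = h ^~ w by apply/funext => n; rewrite step_int.
  by rewrite -HE.
Qed.

Lemma A_bound2 {R : realType} (I : R -> R) (M a b t : R) :
  (forall a b, 0 <= a -> a <= b -> `|I b - I a| <= M * (b - a)) ->
  (forall a, 0 <= a -> `|I a| <= M * a) -> 0 <= M ->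
  0 < t -> t <= a -> t <= b -> `|I b / b - I a / a| <= 2 * M * `|b - a| / t.
Proof.
move=> hd hb M0 t0 ta tb.
have key : forall a b, t <= a -> a <= b -> `|I b / b - I a / a| <= 2 * M * `|b - a| / t.
  move=> a' b' ta' ab'.
  apply: (le_trans (@A_bound R I M a' b' hd hb (lt_le_trans t0 ta') ab')).
  rewrite (@ger0_norm _ (b' - a')) ?subr_ge0 //.
  have b0 : 0 < b' by apply: (lt_le_trans t0); exact: (le_trans ta').
  apply: ler_wpM2l; first by rewrite mulr_ge0 ?subr_ge0 // mulr_ge0.
  by rewrite lef_pV2 ?posrE // (le_trans ta').
case: (leP a b) => ab; first exact: key.
rewrite distrC (distrC b); exact: key (ltW ab).
Qed.

Theorem lemma2p24 (R : realType) (E : pseudoPMetricType R)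
  (d : measure_display) (Omega : measurableType d)
  (P : E -> probability Omega R) (X : R -> Omega -> E)
  (mu : probability (Borel E) R) (f : E -> R) :
  good_state_space E ->
  right_continuous_Markov P X ->
  weak_Feller P X ->
  ergodic_with P X mu ->
  continuous f -> (exists M, forall y, `|f y| <= M) ->
  (* assumption (L) *)
  (forall (delta eps : R) (K : set E), 0 < delta -> 0 < eps -> compact K ->
     exists (N : nat) (p : R), (0 < N)%N /\ 0 < p /\
       forall (n : nat) (x : E), (N <= n)%N -> K x ->
         (P x [set w | (eps < `| time_avg X f (n%:R * delta) w - mean mu f |)%R]
           <= (expR (- (p * n%:R * delta))%R)%:E)%E) ->
  forall (eps : R) (K : set E), 0 < eps -> compact K ->
    exists (S C rho : R), [/\ 0 < S, 0 < C & 0 < rho] /\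
      forall (t : R) (x : E), S <= t -> K x ->
        (P x [set w | eps%:E < ereal_sup
            [set (`| time_avg X f s w - mean mu f |)%R%:E | s in [set s | (t <= s)%R]]]
          <= (C * expR (- (rho * t)))%R%:E)%E.
Proof.
move=> _ [mX rcX _ _ _] _ _ cf [M0 hM0] L eps K eps0 cK.
pose M := `|M0| + 1.
have M0' : 0 < M by have := normr_ge0 M0; rewrite /M => ?; lra.
have hf : forall y, `|f y| <= M.
  move=> y; apply: (le_trans (hM0 y)); apply: (le_trans (ler_norm M0)).
  by rewrite /M lerDl.
have e20 : 0 < eps / 2 by rewrite divr_gt0.
have [N [p [N0 [p0 HL]]]] := L 1 (eps / 2) K ltr01 e20 cK.
set m := mean mu f.
have rc : forall w u, 0 <= u -> (fun u => f (X u w)) x @[x --> u^'+] --> f (X u w).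
  by move=> w u u0; exact: (cvg_comp _ _ (rcX w u u0) (cf (X u w))).
have mI : forall (w : Omega) (s : R), measurable_fun `[0, s] (fun u => f (X u w)).
  by move=> w s; exact: (@step_lim R (fun u => f (X u w)) M s (fun u => hf _) (rc w)).1.
have Ab : forall w a b t, 0 < t -> t <= a -> t <= b ->
    `|time_avg X f b w - time_avg X f a w| <= 2 * M * `|b - a| / t.
  move=> w a b t t0 ta tb; rewrite /time_avg.
  apply: (@A_bound2 R (fun s => Rintegral (@lebesgue_measure R) `[0, s] (fun u => f (X u w))) M) => //.
  - by move=> a' b' a0 ab; apply: I_diff => //.
  - by move=> a' a0; apply: I_bound => //.
  - exact: ltW.
have Ab1 : forall w a b, 0 < a -> a <= b ->
    `|time_avg X f b w - time_avg X f a w| <= 2 * M * (b - a) / b.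
  move=> w a b a0 ab; rewrite /time_avg.
  apply: (@A_bound R (fun s => Rintegral (@lebesgue_measure R) `[0, s] (fun u => f (X u w))) M) => //.
  - by move=> a' b' a0' ab'; apply: I_diff => //.
  - by move=> a' a0'; apply: I_bound => //.
have mB : forall e s, measurable [set w | e < `|time_avg X f s w - m|].
  move=> e s.
  have mF : measurable_fun setT (fun w => `|time_avg X f s w - m|).
    apply: (measurableT_comp (@normr_measurable R setT)).
    apply: measurable_funB; last exact: measurable_cst.
    rewrite /time_avg; apply: measurable_funM; last exact: measurable_cst.
    exact: (@int_meas_w R E d Omega X f M s mX rcX cf hf).
  suff -> : [set w | e < `|time_avg X f s w - m|] =
      (fun w => `|time_avg X f s w - m|) @^-1` `]e, +oo[%classic.
    by rewrite -[X in measurable X]setTI; exact: mF measurableT _ (measurable_itv _).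
  by apply/seteqP; split => w /=; rewrite in_itv /= andbT.
pose S := N%:R + 1 + 4 * M / eps.
have MS : 0 < 4 * M / eps by rewrite divr_gt0 // mulr_gt0.
have N0r : 0 <= N%:R :> R by [].
have z1 : expR (- p) < 1 by rewrite expR_lt1 oppr_lt0.
have z0 : 0 < expR (- p) := expR_gt0 _.
exists S, (expR p / (1 - expR (- p))), p; split.
  split => //; first by rewrite /S; lra.
  by rewrite divr_gt0 ?expR_gt0 // subr_gt0.
move=> t x St Kx.
have t0 : 0 < t by move: St; rewrite /S => ?; lra.
have tM : 2 * M / t <= eps / 2.
  rewrite ler_pdivrMr //.
  have : 4 * M / eps <= t by move: St; rewrite /S => ?; lra.
  rewrite ler_pdivrMr // => h; nra.
set n0 := Num.truncn t.
have n0N : (N <= n0)%N by rewrite truncn_ge_nat ?(ltW t0) //; move: St; rewrite /S => ?; lra.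
have n0t : t < n0.+1%:R by rewrite -truncn_le_nat.
pose F i := [set w | eps / 2 < `|time_avg X f ((i + n0)%N%:R * 1) w - m|].
set Et := [set w | _].
have sub : Et `<=` \bigcup_i F i.
  move=> w /ereal_sup_gtP [y [s ts <-]]; rewrite lte_fin => hy.
  have s0 : 0 < s := lt_le_trans t0 ts.
  set n := Num.truncn s.
  have ns : n%:R <= s by rewrite truncn_le ltW.
  have sn1 : s < n.+1%:R by rewrite -truncn_le_nat.
  have n0n : (n0 <= n)%N := le_truncn ts.
  have npos : 0 < n%:R :> R by rewrite ltr0n (leq_trans N0 (leq_trans n0N n0n)).
  exists (n - n0)%N => //.
  rewrite /F /= subnK // mulr1.
  have h1 := Ab1 w n%:R s npos ns.
  have h2 : 2 * M * (s - n%:R) / s <= 2 * M / t.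
    apply: (@le_trans _ _ (2 * M / s)).
      rewrite ler_pM2r ?invr_gt0 // ger_pMr ?mulr_gt0 //.
      by move: sn1; rewrite -natr1 => ?; lra.
    by rewrite ler_pM2l ?mulr_gt0 // lef_pV2 ?posrE.
  have h3 := ler_distD (time_avg X f n%:R w) (time_avg X f s w) m.
  lra.
have mEt : measurable Et.
  have EtE : Et = \bigcup_(q : rat) [set w | eps < `|time_avg X f (t + `|ratr q|) w - m|].
    apply/seteqP; split.
    - move=> w /ereal_sup_gtP [y [s ts <-]]; rewrite lte_fin => hy.
      pose eta := `|time_avg X f s w - m| - eps.
      have eta0 : 0 < eta by rewrite /eta subr_gt0.
      pose del := eta * t / (2 * M).
      have del0 : 0 < del by rewrite /del divr_gt0 ?mulr_gt0.
      have [r [hr [q _ qr]]] : exists r, (ball (s - t) del `&` range ratr) r.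
        apply: dense_rat; last exact: ball_open.
        by exists (s - t); exact: ballxx.
      exists q => //=; rewrite qr.
      have st0 : 0 <= s - t by rewrite subr_ge0.
      have hd : `|t + `|r| - s| < del.
        have -> : t + `|r| - s = `|r| - `|s - t| by rewrite (ger0_norm st0); ring.
        apply: le_lt_trans; first exact: ler_dist_dist.
        by rewrite distrC; move: hr; rewrite /ball /=.
      have tr : t <= t + `|r| by rewrite lerDl.
      have h1 := Ab w s (t + `|r|) t t0 ts tr.
      rewrite distrC in h1.
      have h3 := ler_distD (time_avg X f (t + `|r|) w) (time_avg X f s w) m.
      have h4 : 2 * M * `|t + `|r| - s| / t < eta.
        rewrite ltr_pdivrMr //.
        move: hd; rewrite /del ltr_pdivlMr ?mulr_gt0 // => hd.
        lra.
      rewrite /eta in h4.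
      lra.
    - move=> w [q _ hq]; apply/ereal_sup_gtP.
      exists (`|time_avg X f (t + `|ratr q|) w - m|)%:E; last by rewrite lte_fin.
      by exists (t + `|ratr q|) => //=; rewrite lerDl.
  rewrite EtE; apply: bigcupT_measurable_rat => q; exact: mB.
have mF : forall i, measurable (F i) by move=> i; exact: mB.
apply: (le_trans (measure_sigma_subadditive (P x) mF mEt sub)).
pose a := expR (- p * n0%:R); pose z := expR (- p).
have a0 : 0 < a := expR_gt0 _.
apply: (@le_trans _ _ (\sum_(0 <= i <oo) (a * z ^+ i)%:E)%E).
  apply: lee_nneseries => [i _ _|i _]; first exact: measure_ge0.
  apply: (le_trans (HL (i + n0)%N x _ Kx)); first exact: (leq_trans n0N (leq_addl _ _)).
  by rewrite lee_fin /a /z mulr1 natrD mulrDr opprD expRD -expRM_natr !mulNr mulrC.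
apply: (@le_trans _ _ (a / (1 - z))%:E).
  apply: lime_le.
    by apply: is_cvg_nneseries => *; rewrite lee_fin mulr_ge0 // ?exprn_ge0 // ltW.
  apply: nearW => k /=; rewrite sumEFin lee_fin.
  have gE := geometric_seriesE a (negbT (lt_eqF z1)).
  have -> : \sum_(0 <= i < k) a * z ^+ i = a * (1 - z ^+ k) / (1 - z).
    by have := congr1 (fun u => u k) gE.
  rewrite ler_pM2r ?invr_gt0 ?subr_gt0 // ger_pMr // gerBl exprn_ge0 // ltW //.
rewrite lee_fin /a /z mulrAC -expRD ler_pM2r ?invr_gt0 ?subr_gt0 // ler_expR.
move: n0t; rewrite -natr1 => ?; nra.
Qed.
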